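(* Let $(M,g)$ be a Riemannian manifold of dimension $n$, with $\mathcal{T}M$, $V$, $\xi_1,\xi_2$, $\omega^1,\omega^2$, $f$ as in the context (on the open set where $F^2+K^2>0$). Then $(f,(\xi_a),(\omega^a))_{a=1,2}$ is a framed $f(3,1)$-structure on $V$, namely: (i) $\omega^a(\xi_b)=\delta^a_b$, $f(\xi_a)=0$ and $\omega^a\circ f=0$ for $a,b\in\{1,2\}$; (ii) $f^2(X)=-X+\omega^1(X)\xi_1+\omega^2(X)\xi_2$ for every $X\in\Gamma(V)$; (iii) $f$ has rank $2n-2$ and $f^3+f=0$.
   Context: Let $M$ be an $n$-dimensional smooth manifold with a Riemannian metric $g=(g_{ij})$, with inverse matrix $(g^{ij})$; summation convention is used. The big-tangent manifold $\mathcal{T}M$ is the total space of $TM\oplus T^*M\to M$, with local coordinates $(x^i,y^i,p_i)$ (the point $y^i\frac{\partial}{\partial x^i}|_x+p_i\,dx^i|_x$). The vertical bundle $V\subset T\mathcal{T}M$ is tangent to the fibres, locally spanned by $\{\frac{\partial}{\partial y^i},\frac{\partial}{\partial p_i}\}$. Put $y_i=g_{ij}y^j$, $p^i=g^{ij}p_j$, $F^2=g_{ij}y^iy^j$, $K^2=g^{ij}p_ip_j$; all objects are considered where $F^2+K^2>0$. $\phi:V\to V$ is given by $\phi(\frac{\partial}{\partial y^i})=-g_{ij}\frac{\partial}{\partial p_j}$, $\phi(\frac{\partial}{\partial p_i})=g^{ij}\frac{\partial}{\partial y^j}$. $\xi_2=\frac{1}{\sqrt{F^2+K^2}}(y^i\frac{\partial}{\partial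 y^i}+p_i\frac{\partial}{\partial p_i})$, $\xi_1=\frac{1}{\sqrt{F^2+K^2}}(p^i\frac{\partial}{\partial y^i}-y_i\frac{\partial}{\partial p_i})$. $\omega^1,\omega^2\in\Gamma(V^* )$: $\omega^1(\frac{\partial}{\partial y^i})=\frac{p_i}{\sqrt{F^2+K^2}}$, $\omega^1(\frac{\partial}{\partial p_i})=-\frac{y^i}{\sqrt{F^2+K^2}}$, $\omega^2(\frac{\partial}{\partial y^i})=\frac{y_i}{\sqrt{F^2+K^2}}$, $\omega^2(\frac{\partial}{\partial p_i})=\frac{p^i}{\sqrt{F^2+K^2}}$. $f:V\to V$ is defined by $f(X)=\phi(X)-\omega^2(X)\xi_1+\omega^1(X)\xi_2$. *)

(* Defs.v *)
(* Pointwise (fibrewise) linear-algebra model of the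
   vertical bundle V of the big-tangent manifold. *)
From HB Require Import structures.
From mathcomp Require Import all_boot all_order all_algebra.
Set Implicit Arguments. Unset Strict Implicit. Unset Printing Implicit Defensive.
Import Order.TTheory GRing.Theory Num.Theory.
Local Open Scope ring_scope.

Section BigTangent.
Variables (R : rcfType) (n : nat).
(* g = (g_ij) the metric at the base point x; y = (y^i), p = (p_i) the fibre
   coordinates of the point (x,y,p) of TM (+) T*M. *)
Variables (g : 'M[R]_n) (y p : 'cV[R]_n).

(* A vertical vector X = X^i d/dy^i + X_i d/dp_i is the column col_mx a b,
   with a = (X^i), b = (X_i). *)
Definition ginv : 'M[R]_n := invmx g.
Definition ylow : 'cV[R]_n := g *m y.
Definition pup  : 'cV[R]_n := ginv *m p.
Definition F2 : R := (y^T *m g *m y) 0 0.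
Definition K2 : R := (p^T *m ginv *m p) 0 0.
Definition nrm : R := Num.sqrt (F2 + K2).

(* phi(d/dy^i) = - g_ij d/dp_j ,  phi(d/dp_i) = g^ij d/dy^j  (matrix acting on columns) *)
Definition phi_mx : 'M[R]_(n + n) := block_mx 0 ginv^T (- g^T) 0.

Definition xi1 : 'cV[R]_(n + n) := nrm^-1 *: col_mx pup (- ylow).
Definition xi2 : 'cV[R]_(n + n) := nrm^-1 *: col_mx y p.

Definition omega1_row : 'rV[R]_(n + n) := nrm^-1 *: row_mx p^T (- y^T).
Definition omega2_row : 'rV[R]_(n + n) := nrm^-1 *: row_mx ylow^T pup^T.

Definition omega1 (X : 'cV[R]_(n + n)) : R := (omega1_row *m X) 0 0.
Definition omega2 (X : 'cV[R]_(n + n)) : R := (omega2_row *m X) 0 0.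
Definition phi (X : 'cV[R]_(n + n)) : 'cV[R]_(n + n) := phi_mx *m X.

Definition f_mx : 'M[R]_(n + n) :=
  phi_mx - xi1 *m omega2_row + xi2 *m omega1_row.
Definition f (X : 'cV[R]_(n + n)) : 'cV[R]_(n + n) := f_mx *m X.


End BigTangent.

Definition riemannian_metric (R : rcfType) (n : nat) (g : 'M[R]_n) : Prop :=
  g^T = g /\ forall v : 'cV[R]_n, v != 0 -> 0 < (v^T *m g *m v) 0 0.

(* Main.v *)
Require Import Defs.
From HB Require Import structures.
From mathcomp Require Import all_boot all_order all_algebra.
From mathcomp Require Import zify ring lra.
Import Order.TTheory GRing.Theory Num.Theory.
Set Implicit Arguments. Unset Strict Implicit.
Local Open Scope ring_scope.

Lemma g_unit (R : rcfType) (n : nat) (g : 'M[R]_n) :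
  riemannian_metric g -> g \in unitmx.
Proof.
move=> [gs gpos]; rewrite -row_free_unit; apply/negPn/negP => nf.
have : kermx g != 0.
  by rewrite -mxrank_eq0 mxrank_ker subn_eq0 -ltnNge ltn_neqAle rank_leq_row andbT.
set K := kermx g => K0.
case: (pickP (fun i => row i K != 0)) => [i Hi|H0]; last first.
  move/negP: K0; apply; apply/eqP/row_matrixP => i; rewrite row0.
  by move: (H0 i) => /= /negbFE/eqP.
have := gpos ((row i K)^T); rewrite trmx_eq0 => /(_ Hi).
rewrite trmxK.
have -> : row i K *m g = 0 by rewrite -row_mul mulmx_ker row0.
by rewrite mul0mx mxE ltxx.
Qed.
Lemma ginvT (R : rcfType) (n : nat) (g : 'M[R]_n) : g^T = g -> (ginv g)^T = ginv g.
Proof. by move=> gs; rewrite /ginv trmx_inv gs. Qed.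

Lemma phi2 (R : rcfType) (n : nat) (g : 'M[R]_n) : g^T = g -> g \in unitmx ->
  phi_mx g *m phi_mx g = - 1%:M.
Proof.
move=> gs gu; rewrite /phi_mx mulmx_block !mulmx0 !mul0mx !addr0 !add0r ginvT // gs.
rewrite mulmxN mulNmx /ginv mulmxV // mulVmx //.
by rewrite (scalar_mx_block n n) opp_block_mx !oppr0.
Qed.

Lemma phi_xi2 (R : rcfType) (n : nat) (g : 'M[R]_n) y p : g^T = g -> g \in unitmx ->
  phi_mx g *m xi2 g y p = xi1 g y p.
Proof.
move=> gs gu; rewrite /xi2 /xi1 -scalemxAr /phi_mx mul_block_col !mul0mx addr0 add0r.
by rewrite ginvT // gs mulNmx.
Qed.

Lemma phi_xi1 (R : rcfType) (n : nat) (g : 'M[R]_n) y p : g^T = g -> g \in unitmx ->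
  phi_mx g *m xi1 g y p = - xi2 g y p.
Proof.
move=> gs gu; rewrite /xi2 /xi1 -scalemxAr /phi_mx mul_block_col !mul0mx addr0 add0r.
rewrite ginvT // gs mulNmx mulmxN /ylow /pup !mulmxA mulmxV // mulVmx // !mul1mx.
by rewrite -scalerN opp_col_mx.
Qed.

Lemma om1_phi (R : rcfType) (n : nat) (g : 'M[R]_n) y p : g^T = g -> g \in unitmx ->
  omega1_row g y p *m phi_mx g = omega2_row g y p.
Proof.
move=> gs gu; rewrite /omega1_row /omega2_row -scalemxAl /phi_mx mul_row_block !mulmx0 addr0 add0r.
by rewrite /ylow /pup !trmx_mul ginvT // gs mulNmx mulmxN opprK.
Qed.

Lemma om2_phi (R : rcfType) (n : nat) (g : 'M[R]_n) y p : g^T = g -> g \in unitmx ->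
  omega2_row g y p *m phi_mx g = - omega1_row g y p.
Proof.
move=> gs gu; rewrite /omega1_row /omega2_row -scalemxAl /phi_mx mul_row_block !mulmx0 addr0 add0r.
rewrite /ylow /pup !trmx_mul ginvT // gs mulmxN -!mulmxA mulmxV // mulVmx // !mulmx1.
by rewrite -scalerN opp_row_mx opprK.
Qed.
Lemma nrm_inv (R : rcfType) (n : nat) (g : 'M[R]_n) y p : 0 < F2 g y + K2 g p ->
  (nrm g y p)^-1 * (nrm g y p)^-1 * (F2 g y + K2 g p) = 1.
Proof.
move=> N0; rewrite /nrm.
have hs := sqr_sqrtr (ltW N0).
have h : Num.sqrt (F2 g y + K2 g p) != 0 by rewrite sqrtr_eq0 -ltNge.
rewrite -[X in _ * X]hs. move: h; generalize (Num.sqrt (F2 g y + K2 g p)) => s h.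
by field.
Qed.

Lemma swap11 (R : rcfType) (n : nat) (a b : 'cV[R]_n) : (a^T *m b) 0 0 = (b^T *m a) 0 0.
Proof. have := congr1 (fun M : 'M_1 => M 0 0) (trmx_mul b^T a); rewrite trmxK /= mxE => <-. by []. Qed.

Lemma sE (R : ringType) m k (a : R) (A : 'M[R]_(m,k)) i j : (a *: A) i j = a * A i j.
Proof. by rewrite mxE. Qed.
Lemma dE (R : ringType) m k (A B : 'M[R]_(m,k)) i j : (A + B) i j = A i j + B i j.
Proof. by rewrite mxE. Qed.
Lemma nE (R : ringType) m k (A : 'M[R]_(m,k)) i j : (- A) i j = - A i j.
Proof. by rewrite mxE. Qed.

Lemma omxi (R : rcfType) (n : nat) (g : 'M[R]_n) y p : g^T = g -> g \in unitmx ->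
  0 < F2 g y + K2 g p ->
  omega1 g y p (xi1 g y p) = 1 /\ omega1 g y p (xi2 g y p) = 0 /\
    omega2 g y p (xi1 g y p) = 0 /\ omega2 g y p (xi2 g y p) = 1.
Proof.
move=> gs gu N0; rewrite /omega1 /omega2 /omega1_row /omega2_row /xi1 /xi2.
rewrite -!scalemxAl -!scalemxAr !mul_row_col.
rewrite /ylow /pup !trmx_mul ginvT // gs !mulmxN !mulNmx ?opprK /ginv -!mulmxA mulKVmx // mulKmx //.
rewrite !sE !dE !nE !mulmxA.
rewrite (swap11 p y) subrr !mulr0 -(nrm_inv N0) /F2 /K2 /ginv mulrA [_ + (y^T *m _ *m _) 0 0]addrC.
do !split. all: try by []. by rewrite mulrA.
Qed.

Lemma rowlin (R : rcfType) m (w : 'rV[R]_m) (A B : 'cV[R]_m) a :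
  ((w *m (A + B)) 0 0 = (w *m A) 0 0 + (w *m B) 0 0) /\
  ((w *m (- A)) 0 0 = - (w *m A) 0 0) /\
  ((w *m (a *: A)) 0 0 = a * (w *m A) 0 0).
Proof. by rewrite mulmxDr mulmxN -scalemxAr !mxE. Qed.

Lemma fE (R : rcfType) (n : nat) (g : 'M[R]_n) y p X :
  f g y p X = phi g X - omega2 g y p X *: xi1 g y p + omega1 g y p X *: xi2 g y p.
Proof.
rewrite /f /f_mx /phi /omega1 /omega2 mulmxDl mulmxBl -!mulmxA.
have h : forall (c : 'cV[R]_(n+n)) (M : 'M_1), c *m M = M 0 0 *: c.
  by move=> c M; rewrite {1}(mx11_scalar M) mul_mx_scalar.
by rewrite !h.
Qed.

Lemma vecpart (R : rcfType) (n : nat) (g : 'M[R]_n) y p :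
  g^T = g -> g \in unitmx -> 0 < F2 g y + K2 g p ->
  ((f g y p (xi1 g y p) = 0 /\ f g y p (xi2 g y p) = 0) /\
   (forall X, omega1 g y p (f g y p X) = 0) /\
   (forall X, omega2 g y p (f g y p X) = 0)) /\
  (forall X, f g y p (f g y p X) =
     - X + omega1 g y p X *: xi1 g y p + omega2 g y p X *: xi2 g y p) /\
  (forall X, f g y p (f g y p (f g y p X)) + f g y p X = 0).
Proof.
move=> gs gu N0.
have [o11 [o12 [o21 o22]]] := omxi gs gu N0.
have o1D : forall A B, omega1 g y p (A + B) = omega1 g y p A + omega1 g y p B.
  by move=> A B; case: (rowlin (omega1_row g y p) A B 0).
have o1N : forall A, omega1 g y p (- A) = - omega1 g y p A.
  by move=> A; case: (rowlin (omega1_row g y p) A A 0) => _ [].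
have o1Z : forall a A, omega1 g y p (a *: A) = a * omega1 g y p A.
  by move=> a A; case: (rowlin (omega1_row g y p) A A a) => _ [].
have o2D : forall A B, omega2 g y p (A + B) = omega2 g y p A + omega2 g y p B.
  by move=> A B; case: (rowlin (omega2_row g y p) A B 0).
have o2N : forall A, omega2 g y p (- A) = - omega2 g y p A.
  by move=> A; case: (rowlin (omega2_row g y p) A A 0) => _ [].
have o2Z : forall a A, omega2 g y p (a *: A) = a * omega2 g y p A.
  by move=> a A; case: (rowlin (omega2_row g y p) A A a) => _ [].
have pD : forall A B, phi g (A + B) = phi g A + phi g B by move=> A B; rewrite /phi mulmxDr.
have pN : forall A, phi g (- A) = - phi g A by move=> A; rewrite /phi mulmxN.
have pZ : forall a A, phi g (a *: A) = a *: phi g A by move=> a A; rewrite /phi scalemxAr.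
have fD : forall A B, f g y p (A + B) = f g y p A + f g y p B by move=> A B; rewrite /f mulmxDr.
have fN : forall A, f g y p (- A) = - f g y p A by move=> A; rewrite /f mulmxN.
have fZ : forall a A, f g y p (a *: A) = a *: f g y p A by move=> a A; rewrite /f scalemxAr.
have pp : forall X, phi g (phi g X) = - X by move=> X; rewrite /phi mulmxA phi2 // mulNmx mul1mx.
have op1 : forall X, omega1 g y p (phi g X) = omega2 g y p X.
  by move=> X; rewrite /omega1 /omega2 /phi mulmxA om1_phi.
have op2 : forall X, omega2 g y p (phi g X) = - omega1 g y p X.
  by move=> X; rewrite /omega1 /omega2 /phi mulmxA om2_phi // mulNmx mxE.
have px1 : phi g (xi1 g y p) = - xi2 g y p by rewrite /phi phi_xi1.
have px2 : phi g (xi2 g y p) = xi1 g y p by rewrite /phi phi_xi2.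
have fx1 : f g y p (xi1 g y p) = 0.
  by rewrite fE px1 o21 o11 scale0r subr0 scale1r addNr.
have fx2 : f g y p (xi2 g y p) = 0.
  by rewrite fE px2 o22 o12 scale0r addr0 scale1r subrr.
have of1 : forall X, omega1 g y p (f g y p X) = 0.
  by move=> X; rewrite fE !(o1D, o1N) (o1Z _ (xi1 g y p)) (o1Z _ (xi2 g y p)) op1 o11 o12 mulr1 mulr0 addr0 subrr.
have of2 : forall X, omega2 g y p (f g y p X) = 0.
  by move=> X; rewrite fE !(o2D, o2N) (o2Z _ (xi1 g y p)) (o2Z _ (xi2 g y p)) op2 o21 o22 mulr1 mulr0 subr0 addNr.
have ff : forall X, f g y p (f g y p X) =
     - X + omega1 g y p X *: xi1 g y p + omega2 g y p X *: xi2 g y p.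
  move=> X; rewrite {1}fE of1 of2 !scale0r subr0 addr0 fE !(pD, pN) (pZ _ (xi1 g y p)) (pZ _ (xi2 g y p)) pp px1 px2.
  by rewrite scalerN opprK addrAC.
split; first by do !split.
split=> // X.
by rewrite ff of1 of2 !scale0r !addr0 addNr.
Qed.
Lemma mxext (R : ringType) m k (A B : 'M[R]_(m, k)) :
  (forall X : 'cV_k, A *m X = B *m X) -> A = B.
Proof.
move=> H; apply/matrixP => i j.
have := congr1 (fun M : 'M_(m,1) => M i 0) (H (delta_mx j 0)).
by rewrite -!colE !mxE.
Qed.

Lemma rank_gen (R : fieldType) m (F : 'M[R]_m) (x1 x2 : 'cV[R]_m) (w1 w2 : 'rV[R]_m) :
  (forall X : 'cV_m, F *m (F *m (F *m X)) + F *m X = 0) ->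
  (forall X : 'cV_m, F *m (F *m X) = - X + (w1 *m X) 0 0 *: x1 + (w2 *m X) 0 0 *: x2) ->
  F *m x1 = 0 -> F *m x2 = 0 ->
  (w1 *m x1) 0 0 = 1 -> (w1 *m x2) 0 0 = 0 -> (w2 *m x1) 0 0 = 0 -> (w2 *m x2) 0 0 = 1 ->
  \rank F = (m - 2)%N.
Proof.
move=> H1 H2 Fx1 Fx2 e11 e12 e21 e22.
have h : forall (c : 'cV[R]_m) (M : 'M_1), c *m M = M 0 0 *: c.
  by move=> c M; rewrite {1}(mx11_scalar M) mul_mx_scalar.
have F3 : F *m F *m F = - F.
  apply: mxext => X; rewrite -!mulmxA mulNmx; apply/eqP; rewrite -subr_eq0 opprK.
  by rewrite H1.
set P := x1 *m w1 + x2 *m w2.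
have FF : F *m F = - 1%:M + P.
  apply: mxext => X; rewrite -mulmxA H2 /P !mulmxDl mulNmx mul1mx -!mulmxA !h.
  by rewrite addrA.
have r1 : \rank F = \rank (F *m F).
  apply/eqP; rewrite eqn_leq mxrankM_maxl andbT.
  by rewrite -mxrank_opp -F3 mxrankM_maxl.
have r2 : (m <= 2 + \rank (F *m F))%N.
  have e : (1%:M : 'M[R]_m) = P + - (F *m F) by rewrite FF opprD opprK addrC subrK.
  rewrite -{1}(mxrank1 R m) e.
  apply: leq_trans (mxrank_add _ _) _; rewrite mxrank_opp leq_add2r.
  apply: leq_trans (mxrank_add _ _) _.
  have l1 : forall (c : 'cV[R]_m) (w : 'rV[R]_m), (\rank (c *m w) <= 1)%N.
    by move=> c w; apply: leq_trans (mxrankM_maxr _ _) (rank_leq_row _).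
  by rewrite -[2%N]/(1 + 1)%N leq_add.
set U := row_mx x1 x2.
have FU : F *m F *m U = 0 by rewrite -mulmxA mul_mx_row Fx1 Fx2 row_mx0 mulmx0.
have m1 : forall M : 'M[R]_1, M 0 0 = 1 -> M = 1%:M.
  by move=> M e; apply/matrixP => i j; rewrite !ord1 e mxE.
have m0 : forall M : 'M[R]_1, M 0 0 = 0 -> M = 0.
  by move=> M e; apply/matrixP => i j; rewrite !ord1 e mxE.
have WU : col_mx w1 w2 *m U = 1%:M.
  by rewrite mul_col_row (m1 _ e11) (m1 _ e22) (m0 _ e12) (m0 _ e21) -scalar_mx_block.
have rU : (2 <= \rank U)%N.
  by rewrite -[X in (X <= _)%N](mxrank1 R 2) -WU mxrankM_maxr.
have r3 := mxrank_mul_min (F *m F) U.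
rewrite FU mxrank0 in r3.
rewrite r1; lia.
Qed.

Theorem theorem5p1 (R : rcfType) (n : nat) (g : 'M[R]_n) (y p : 'cV[R]_n) :
  riemannian_metric g ->
  0 < F2 g y + K2 g p ->
  (* (i) *)
  ((omega1 g y p (xi1 g y p) = 1 /\ omega1 g y p (xi2 g y p) = 0 /\
    omega2 g y p (xi1 g y p) = 0 /\ omega2 g y p (xi2 g y p) = 1) /\
   (f g y p (xi1 g y p) = 0 /\ f g y p (xi2 g y p) = 0) /\
   (forall X, omega1 g y p (f g y p X) = 0) /\
   (forall X, omega2 g y p (f g y p X) = 0)) /\
  (* (ii) *)
  (forall X, f g y p (f g y p X) =
     - X + omega1 g y p X *: xi1 g y p + omega2 g y p X *: xi2 g y p) /\
  (* (iii) *)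
  \rank (f_mx g y p) = (n + n - 2)%N /\
  (forall X, f g y p (f g y p (f g y p X)) + f g y p X = 0).
Proof.
move=> rg N0; have gu := g_unit rg; case: rg => gs _.
have o := omxi gs gu N0.
have [[fx of12] [ff f3]] := vecpart gs gu N0.
split; first by split.
split=> //; split=> //.
case: o => [e11 [e12 [e21 e22]]].
exact: (rank_gen (F := f_mx g y p) (x1 := xi1 g y p) (x2 := xi2 g y p)
   (w1 := omega1_row g y p) (w2 := omega2_row g y p) f3 ff fx.1 fx.2 e11 e12 e21 e22).
Qed.
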